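(* Suppose all edge probabilities $p_{ij}$ and the community size $r$ are known, and fix $\epsilon>0$. Consider the scan test that rejects the null hypothesis (outputs $1$) if and only if \[ T^{\mathsf k}:=\max_{D\subseteq V,\ 1\le|D|\le r}T^{\mathsf k}_D\ \ge\ 1+\frac{\epsilon}{2}. \] This test is asymptotically powerful provided the following three conditions hold: $r=o(n)$; $\mathbb{E}_C[e(D^\star_C)]\to\infty$ for all $C\subseteq V$ with $|C|=r$; and for every $C\subseteq V$ with $|C|=r$, \[ \max_{\emptyset\ne D\subseteq C}\frac{\mathbb{E}_0[e(D)]\,h(\rho_C-1)}{|D|\log(n/|D|)}\ge1+\epsilon . \]
   Context: Setting. For each $n$ let $V=\{1,\dots,n\}$, let $p_{ij}=p_{ji}\in[0,1]$ ($i\ne j$) be edge probabilities, let $r=r_n$ be a community size, and for every $C\subseteq V$ with $|C|=r$ let $\rho_C>1$ be a scaling with $\rho_Cp_{ij}\le1$ for $i,j\in C$. All of these may depend on $n$, and limits are as $n\to\infty$. One observes a simple undirected graph on $V$ with adjacency matrix $A$. Under $\mathbb{P}_0$ the $A_{ij}$, $i<j$, are independent $\mathrm{Bern}(p_{ij})$. Under $\mathbb{P}_C$ ($|C|=r$) they are independent with $A_{ij}\sim\mathrm{Bern}(\rho_Cp_{ij})$ if $i,j\in C$ and $\mathrm{Bern}(p_{ij})$ otherwise. $\mathbb{E}_0$ and $\mathbb{E}_C$ are the corresponding expectations. A test $\psi_n$ (a map from graphs to $\{0,1\}$) has worst-case risk $R_n(\psi_n)=\mathbb{P}_0(\psi_n\ne0)+\max_{|C|=r}\mathbb{P}_C(\psi_n\ne1)$.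 It is asymptotically powerful if $R_n(\psi_n)\to0$. Notation. $e(D)=\sum_{i<j,\ i,j\in D}A_{ij}$. $h(x)=(x+1)\log(x+1)-x$. $[x]_+=\max\{x,0\}$. For $D\subseteq V$, \[ T^{\mathsf k}_D=\frac{\mathbb{E}_0[e(D)]\,h\big([e(D)/\mathbb{E}_0[e(D)]-1]_+\big)}{|D|\log(n/|D|)}, \] with the convention $T^{\mathsf k}_D=0$ when $\mathbb{E}_0[e(D)]=0$. For $C$ with $|C|=r$, $D^\star_C$ denotes a maximizer of $\frac{\mathbb{E}_0[e(D)]}{|D|\log(n/|D|)}$ over nonempty $D\subseteq C$ (the ''most informative subgraph''). *)

(* Defs.v *)
From HB Require Import structures.
From mathcomp Require Import all_boot all_order all_algebra.
From mathcomp Require Import all_classical all_reals all_analysis.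
Set Implicit Arguments. Unset Strict Implicit. Unset Printing Implicit Defensive.
Import Order.TTheory GRing.Theory Num.Theory.
Import numFieldNormedType.Exports.
Local Open Scope ring_scope.

(* Potential edges {i,j} of the complete graph on V = 'I_n, encoded as i < j. *)
Definition edge (n : nat) := {e : 'I_n * 'I_n | (e.1 < e.2)%N}.

Definition graph (n : nat) := {ffun edge n -> bool}.

Section Model.
Variable R : realType.
Variable n : nat.

Definition gprob (q : edge n -> R) (A : graph n) : R :=
  \prod_(e : edge n) (if A e then q e else 1 - q e).

Definition Pr (q : edge n -> R) (E : pred (graph n)) : R :=
  \sum_(A : graph n | E A) gprob q A.

Definition Ex (q : edge n -> R) (X : graph n -> R) : R :=
  \sum_(A : graph n) gprob q A * X A.

Definition q0 (p : 'I_n -> 'I_n -> R) : edge n -> R :=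
  fun e => p (val e).1 (val e).2.

Definition qC (p : 'I_n -> 'I_n -> R) (rhoC : R) (C : {set 'I_n}) : edge n -> R :=
  fun e => if ((val e).1 \in C) && ((val e).2 \in C)
           then rhoC * p (val e).1 (val e).2 else p (val e).1 (val e).2.

Definition eD (D : {set 'I_n}) (A : graph n) : R :=
  \sum_(e : edge n | ((val e).1 \in D) && ((val e).2 \in D)) (A e)%:R.

Definition hfun (x : R) : R := (x + 1) * ln (x + 1) - x.

Definition TkD (p : 'I_n -> 'I_n -> R) (D : {set 'I_n}) (A : graph n) : R :=
  let m := Ex (q0 p) (eD D) in
  if m == 0 then 0
  else m * hfun (Num.max (eD D A / m - 1) 0) / (#|D|%:R * ln (n%:R / #|D|%:R)).

(* T^k = max over D with 1 <= |D| <= r of T^k_D (all T^k_D are >= 0). *)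
Definition Tk (p : 'I_n -> 'I_n -> R) (r : nat) (A : graph n) : R :=
  \big[Num.max/0]_(D : {set 'I_n} | (0 < #|D| <= r)%N) TkD p D A.

Definition scan_test (p : 'I_n -> 'I_n -> R) (r : nat) (eps : R) (A : graph n) : bool :=
  1 + eps / 2 <= Tk p r A.

Definition risk (p : 'I_n -> 'I_n -> R) (r : nat) (rho : {set 'I_n} -> R)
    (psi : graph n -> bool) : R :=
  Pr (q0 p) (fun A => psi A != false)
  + \big[Num.max/0]_(C : {set 'I_n} | #|C| == r) Pr (qC p (rho C) C) (fun A => psi A != true).

Definition info (p : 'I_n -> 'I_n -> R) (D : {set 'I_n}) : R :=
  Ex (q0 p) (eD D) / (#|D|%:R * ln (n%:R / #|D|%:R)).

Definition is_most_informative (p : 'I_n -> 'I_n -> R) (C D : {set 'I_n}) : Prop :=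
  D \subset C /\ D != finset.set0 /\
  forall D' : {set 'I_n}, D' \subset C -> D' != finset.set0 -> info p D' <= info p D.

End Model.

Arguments gprob {R n}. Arguments Pr {R n}. Arguments Ex {R n}. Arguments q0 {R n}.
Arguments qC {R n}. Arguments eD {R n}. Arguments hfun {R}. Arguments TkD {R n}.
Arguments Tk {R n}. Arguments scan_test {R n}. Arguments risk {R n}. Arguments info {R n}.
Arguments is_most_informative {R n}.

(* Main.v *)
Require Import Defs.
From HB Require Import structures.
From mathcomp Require Import all_boot all_order all_algebra.
From mathcomp Require Import all_classical all_reals all_analysis.
From mathcomp Require Import ring lra.
Import Order.TTheory GRing.Theory Num.Theory.
Import numFieldNormedType.Exports.
Local Open Scope ring_scope.

Module M1.
Set Implicit Arguments. Unset Strict Implicit.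

Section Prob.
Variables (R : realType) (n : nat).
Implicit Types (q : edge n -> R) (D : {set 'I_n}).

Definition okq q := forall e, 0 <= q e <= 1.

Definition inD D (e : edge n) := ((val e).1 \in D) && ((val e).2 \in D).

Lemma gprob_ge0 q : okq q -> forall A, 0 <= gprob q A.
Proof.
move=> hq A; apply: prodr_ge0 => e _; have /andP[h0 h1] := hq e.
by case: (A e) => //; rewrite subr_ge0.
Qed.

Lemma Ex_prod q (f : edge n -> bool -> R) :
  Ex q (fun A => \prod_e f e (A e)) =
  \prod_e (q e * f e true + (1 - q e) * f e false).
Proof.
rewrite /Ex /gprob.
have -> : \prod_e (q e * f e true + (1 - q e) * f e false) =
   \prod_e \sum_(b : bool) ((if b then q e else 1 - q e) * f e b).
  by apply: eq_bigr => e _; rewrite big_bool.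
rewrite bigA_distr_bigA /=; apply: eq_bigr => A _.
by rewrite -big_split.
Qed.

Lemma Ex_sum q (I : finType) (P : pred I) (X : I -> graph n -> R) :
  Ex q (fun A => \sum_(i | P i) X i A) = \sum_(i | P i) Ex q (X i).
Proof.
rewrite /Ex; under eq_bigr do rewrite mulr_sumr.
by rewrite exchange_big.
Qed.

Lemma Ex_edge q e0 : Ex q (fun A => (A e0)%:R) = q e0.
Proof.
have := Ex_prod q (fun e b => if e == e0 then (b%:R : R) else 1).
have -> : (fun A : graph n => \prod_e (if e == e0 then ((A e)%:R : R) else 1)) =
          (fun A : graph n => ((A e0)%:R : R)).
  apply: funext => A; rewrite -big_mkcond /=.
  by rewrite big_pred1_eq.
move=> ->; rewrite (bigD1 e0) //= eqxx big1 ?mulr1.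
  by rewrite mulr0 addr0.
by move=> e /negPf ->; rewrite !mulr1 subrKC.
Qed.

Lemma Ex_eD q D : Ex q (eD D) = \sum_(e | inD D e) q e.
Proof.
rewrite /eD (Ex_sum q (fun e => inD D e) (fun e A => (A e)%:R)).
by apply: eq_bigr => e _; rewrite Ex_edge.
Qed.

Lemma Ex_ge0 q X : okq q -> (forall A, 0 <= X A) -> 0 <= Ex q X.
Proof.
move=> hq hX; apply: sumr_ge0 => A _; apply: mulr_ge0 => //.
exact: gprob_ge0.
Qed.

Lemma Ex_eD_ge0 q D : okq q -> 0 <= Ex q (eD D).
Proof.
move=> hq; rewrite Ex_eD; apply: sumr_ge0 => e _.
by case/andP: (hq e).
Qed.

Lemma Pr_ge0 q E : okq q -> 0 <= Pr q E.
Proof. by move=> hq; apply: sumr_ge0 => A _; apply: gprob_ge0. Qed.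

Lemma markov q (E : pred (graph n)) (Y : graph n -> R) :
  okq q -> (forall A, 0 <= Y A) -> (forall A, E A -> 1 <= Y A) ->
  Pr q E <= Ex q Y.
Proof.
move=> hq hY hE; rewrite /Pr /Ex.
rewrite [X in _ <= X](bigID E) /= -[X in X <= _]addr0.
apply: lerD.
  apply: ler_sum => A /hE h1.
  by rewrite -{1}[gprob q A]mulr1; apply: ler_wpM2l => //; apply: gprob_ge0.
apply: sumr_ge0 => A _; apply: mulr_ge0 => //; exact: gprob_ge0.
Qed.

Lemma mgf q D (l : R) :
  Ex q (fun A => expR (l * eD D A)) =
  \prod_e (if inD D e then q e * expR l + (1 - q e) else 1).
Proof.
have -> : (fun A => expR (l * eD D A)) =
   (fun A : graph n => \prod_e (fun e b => if inD D e then expR (l * b%:R) else 1) e (A e)).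
  apply: funext => A; rewrite /eD mulr_sumr expR_sum big_mkcond /=.
  by apply: eq_bigr => e _; rewrite /inD.
rewrite (Ex_prod q (fun e b => if inD D e then expR (l * b%:R) else 1)).
apply: eq_bigr => e _ /=.
by case: ifP => _; rewrite ?mulr1 ?mulr0 ?expR0 ?mulr1 // subrKC.
Qed.

Lemma mgf_le q D (l : R) : okq q ->
  Ex q (fun A => expR (l * eD D A)) <= expR ((expR l - 1) * Ex q (eD D)).
Proof.
move=> hq; rewrite mgf Ex_eD mulr_sumr expR_sum.
rewrite [X in _ <= X]big_mkcond /=; apply: ler_prod => e _.
case: ifP => _; last by rewrite lexx ler01.
have /andP[h0 h1] := hq e.
apply/andP; split.
  by apply: addr_ge0; [apply: mulr_ge0 => //; apply: expR_ge0|rewrite subr_ge0].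
have := expR_ge1Dx ((expR l - 1) * q e).
apply: le_trans; rewrite le_eqVlt; apply/orP; left; apply/eqP; ring.
Qed.


Lemma Ex_scale q X c : Ex q (fun A => X A * c) = Ex q X * c.
Proof. by rewrite /Ex mulr_suml; apply: eq_bigr => A _; rewrite mulrA. Qed.

Lemma upper_tail q D (E : pred (graph n)) s : okq q ->
  0 < Ex q (eD D) -> Ex q (eD D) <= s -> (forall A, E A -> s <= eD D A) ->
  Pr q E <= expR (- (Ex q (eD D) * hfun (s / Ex q (eD D) - 1))).
Proof.
move=> hq; set m := Ex q (eD D) => m0 ms hE.
have s0 : 0 < s by apply: lt_le_trans ms.
have sm1 : 1 <= s / m by rewrite ler_pdivlMr // mul1r.
set l := ln (s / m).
have l0 : 0 <= l by apply: ln_ge0.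
have el : expR l = s / m by rewrite /l lnK // posrE; apply: divr_gt0.
apply: (le_trans (@markov q _ (fun A => expR (l * eD D A) * expR (- (l * s))) hq _ _)).
- by move=> A; apply: mulr_ge0; apply: expR_ge0.
- move=> A /hE hA; rewrite -expRD; rewrite -expR0 ler_expR.
  rewrite subr_ge0; apply: ler_wpM2l => //.
rewrite Ex_scale.
apply: (le_trans (y := expR ((expR l - 1) * m) * expR (- (l * s)))).
  by apply: ler_wpM2r; [apply: expR_ge0| apply: mgf_le].
rewrite -expRD ler_expR el /hfun subrK.
have mn0 : m != 0 by rewrite gt_eqF.
rewrite -/l le_eqVlt; apply/orP; left; apply/eqP.
field; exact: mn0.
Qed.

Lemma lower_tail q D (E : pred (graph n)) t : okq q ->
  0 < Ex q (eD D) -> 0 <= t -> (forall A, E A -> eD D A < Ex q (eD D) - t) ->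
  Pr q E <= expR (- (t ^+ 2 / (4 * Ex q (eD D)))).
Proof.
move=> hq; set m := Ex q (eD D) => m0 t0 hE.
set l := t / (2 * m).
have l0 : 0 <= l by apply: divr_ge0 => //; apply: mulr_ge0 => //; apply: ltW.
apply: (le_trans (@markov q _ (fun A => expR (- l * eD D A) * expR (l * (m - t))) hq _ _)).
- by move=> A; apply: mulr_ge0; apply: expR_ge0.
- move=> A /hE hA; rewrite -expRD; rewrite -expR0 ler_expR.
  have : l * eD D A <= l * (m - t) by apply: ler_wpM2l => //; apply: ltW.
  by rewrite mulNr; lra.
rewrite Ex_scale.
apply: (le_trans (y := expR ((expR (- l) - 1) * m) * expR (l * (m - t)))).
  by apply: ler_wpM2r; [apply: expR_ge0| apply: mgf_le].
rewrite -expRD ler_expR.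
set u := expR (- l).
have u0 : 0 < u by apply: expR_gt0.
have ul : u * (1 + l) <= 1.
  have := expR_ge1Dx l; rewrite /u expRN => h.
  by rewrite mulrC ler_pdivrMr ?expR_gt0 // mul1r.
have key : (u - 1) * m + l * (m - t) <= l ^+ 2 * m - l * t.
  have : (u - 1 + l - l ^+ 2) * (1 + l) <= 0.
    have : (u - 1 + l - l ^+ 2) * (1 + l) = u * (1 + l) - 1 - l ^+ 3 by ring.
    move=> ->; have : 0 <= l ^+ 3 by apply: exprn_ge0.
    lra.
  rewrite pmulr_lle0 ?ltr_wpDr // => h.
  have : (u - 1 + l - l ^+ 2) * m <= 0 by rewrite pmulr_lle0.
  move=> h2; have : (u - 1) * m + l * (m - t) - (l ^+ 2 * m - l * t) =
     (u - 1 + l - l ^+ 2) * m by ring.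
  lra.
apply: (le_trans key).
have mn0 : m != 0 by rewrite gt_eqF.
have -> : l ^+ 2 * m - l * t = - (t ^+ 2 / (4 * m)) by rewrite /l; field.
by [].
Qed.

End Prob.

End M1.
Import M1.

Module M2.

Section H.
Variable R : realType.
Implicit Types a x : R.

Lemma ln_le_sub1 {y : R} : 0 < y -> ln y <= y - 1.
Proof.
move=> y0; have := @le_ln1Dx R (y - 1); rewrite subrKC; apply.
lra.
Qed.

Lemma hfun_tangent a x : 0 <= a -> 0 <= x ->
  hfun a + ln (a + 1) * (x - a) <= hfun x.
Proof.
move=> a0 x0; rewrite /hfun.
have a1 : 0 < a + 1 by rewrite ltr_wpDl.
have x1 : 0 < x + 1 by rewrite ltr_wpDl.
have h := ln_le_sub1 (divr_gt0 a1 x1).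
rewrite ln_div ?posrE // in h.
have : (x + 1) * (ln (a + 1) - ln (x + 1)) <= (x + 1) * ((a + 1) / (x + 1) - 1).
  by apply: ler_wpM2l => //; apply: ltW.
have -> : (x + 1) * ((a + 1) / (x + 1) - 1) = a - x.
  by field; rewrite gt_eqF.
move=> h2.
have : (x + 1) * (ln (a + 1) - ln (x + 1)) =
  (x + 1) * ln (a + 1) - (x + 1) * ln (x + 1) by ring.
lra.
Qed.

Lemma hfun0 : hfun (0 : R) = 0.
Proof. by rewrite /hfun add0r ln1 mulr0 subr0. Qed.

Lemma hfun_ge0 a : 0 <= a -> 0 <= hfun a.
Proof.
move=> a0; have := @hfun_tangent 0 a (lexx 0) a0.
by rewrite hfun0 !add0r ln1 !mul0r.
Qed.

Lemma hfun_le a : 0 <= a -> hfun a <= a * ln (a + 1).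
Proof.
move=> a0; rewrite /hfun.
have := @le_ln1Dx R a; rewrite addrC => /(_ (lt_le_trans (ltrN10 R) a0)) h.
have : (a + 1) * ln (a + 1) - a - a * ln (a + 1) = ln (a + 1) - a by ring.
lra.
Qed.

Lemma hfun_small a : 0 <= a -> ln (a + 1) <= 2 ->
  (a + 1) * ln (a + 1) ^+ 2 / 4 <= hfun a.
Proof.
move=> a0 l2; set l := ln (a + 1) in l2 *.
have a1 : 0 < a + 1 by rewrite ltr_wpDl.
have hv : (1 - l / 2) ^+ 2 <= (a + 1)^-1.
  have e1 : expR (- (l / 2)) ^+ 2 = (a + 1)^-1.
    by rewrite -expRM_natr -mulNr mulfVK ?pnatr_eq0 // expRN lnK.
  rewrite -e1; apply: lerXn2r; rewrite ?nnegrE ?expR_ge0 //.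
    rewrite subr_ge0 ler_pdivrMr //. lra.
  by have := expR_ge1Dx (- (l / 2)); rewrite addrC.
have : (a + 1) * (1 - l / 2) ^+ 2 <= 1.
  by rewrite -[leRHS](mulfV (lt0r_neq0 a1)); apply: ler_wpM2l => //; apply: ltW.
rewrite /hfun -/l.
have : (a + 1) * (1 - l / 2) ^+ 2 = (a + 1) - (a + 1) * l + (a + 1) * l ^+ 2 / 4.
  by field.
lra.
Qed.

Lemma hfun_big a : 0 <= a -> 2 <= ln (a + 1) ->
  (a + 1) * ln (a + 1) / 2 <= hfun a.
Proof.
move=> a0 l2; set l := ln (a + 1) in l2 *; rewrite /hfun -/l.
have : (a + 1) * 2 <= (a + 1) * l by apply: ler_wpM2l => //; lra.
have : (a + 1) * l - a - (a + 1) * l / 2 = ((a + 1) * l - (a + 1) * 2) / 2 + 1.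
  by field.
lra.
Qed.

End H.
Arguments hfun_ge0 {R a}. Arguments hfun_le {R a}. Arguments hfun0 {R}.

End M2.
Import M2.

Module M3.

Section Core.
Variable R : realType.

Definition kap (eps : R) := (eps / 2) / (1 + eps).
Definition T0 (eps m a : R) := kap eps * (m * hfun a) / ln (a + 1).

Lemma T0_ge0 (eps m a : R) : 0 < eps -> 0 < m -> 0 < a -> 0 <= T0 eps m a.
Proof.
move=> e0 m0 a0; rewrite /T0 /kap.
have l0 : 0 < ln (a + 1) by apply: ln_gt0; lra.
apply: divr_ge0; last exact: ltW.
apply: mulr_ge0; first by apply: divr_ge0; lra.
by apply: mulr_ge0; [exact: ltW| apply: hfun_ge0; exact: ltW].
Qed.

Lemma core_good (eps m a L e : R) : 0 < eps -> 0 < m -> 0 < a ->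
  (1 + eps) * L <= m * hfun a -> (a + 1) * m - T0 eps m a <= e ->
  (1 + eps / 2) * L <= m * hfun (Num.max (e / m - 1) 0).
Proof.
move=> e0 m0 a0 hL he.
set l := ln (a + 1).
have l0 : 0 < l by apply: ln_gt0; lra.
set H := m * hfun a.
set k := kap eps.
have k0 : 0 <= k by rewrite /k /kap; apply: divr_ge0; lra.
have k1 : k <= 1 by rewrite /k /kap ler_pdivrMr; lra.
have hle : hfun a <= a * l by apply: hfun_le; exact: ltW.
have Hl : H / l <= m * a.
  rewrite ler_pdivrMr // /H -mulrA; apply: ler_wpM2l; [exact: ltW|done].
have H0 : 0 <= H by apply: mulr_ge0; [exact: ltW| apply: hfun_ge0; exact: ltW].
have Hl0 : 0 <= H / l by apply: divr_ge0 => //; exact: ltW.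
have T0e : T0 eps m a = k * (H / l) by rewrite /T0 -mulrA; reflexivity.
have T0le : T0 eps m a <= m * a.
  rewrite T0e; apply: le_trans Hl; rewrite -[leRHS]mul1r.
  by apply: ler_wpM2r.
have lT : l * T0 eps m a = k * H by rewrite T0e; field; rewrite gt_eqF.
set x := e / m - 1.
have mx : m * x = e - m by rewrite /x mulrBr mulrC mulfVK ?gt_eqF // mulr1.
have x0 : 0 <= x.
  have : 0 <= m * x by rewrite mx; lra.
  by rewrite pmulr_rge0.
rewrite max_l //.
have ht := @hfun_tangent _ a x (ltW a0) x0; rewrite -/l in ht.
have : H + l * (m * x - m * a) <= m * hfun x.
  have := ler_wpM2l (ltW m0) ht.
  have -> : m * (hfun a + l * (x - a)) = H + l * (m * x - m * a) by rewrite /H; ring.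
  done.
rewrite mx => h1.
have h2 : - (l * T0 eps m a) <= l * (e - m - m * a).
  have : - T0 eps m a <= e - m - m * a by lra.
  move=> h; rewrite -mulrN; apply: ler_wpM2l => //; exact: ltW.
rewrite lT in h2.
have : (1 + eps / 2) * L = (1 - k) * ((1 + eps) * L).
  by rewrite /k /kap; field; lra.
move=> ->.
have h3 : (1 - k) * ((1 + eps) * L) <= (1 - k) * H.
  by apply: ler_wpM2l; [lra | exact: hL].
lra.
Qed.

Lemma core_rate (eps m a B : R) : 0 < eps -> 0 < m -> 0 < a ->
  B <= m * hfun a -> B <= (a + 1) * m ->
  kap eps ^+ 2 * B / 16 <= T0 eps m a ^+ 2 / (4 * ((a + 1) * m)).
Proof.
move=> e0 m0 a0 hB hB2.
set l := ln (a + 1).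
have l0 : 0 < l by apply: ln_gt0; lra.
set H := m * hfun a.
set mu := (a + 1) * m.
have mu0 : 0 < mu by rewrite /mu; apply: mulr_gt0 => //; lra.
set k := kap eps.
have H0 : 0 <= H by apply: mulr_ge0; [exact: ltW| apply: hfun_ge0; exact: ltW].
have key : B * (mu * l ^+ 2 / 4) <= H ^+ 2.
  have q0 : 0 <= mu * l ^+ 2 / 4.
    by apply: divr_ge0 => //; apply: mulr_ge0; [exact: ltW|exact: sqr_ge0].
  case: (lerP l 2) => hl.
    have hs := @hfun_small _ a (ltW a0) hl; rewrite -/l in hs.
    have h1 : mu * l ^+ 2 / 4 <= H.
      have := ler_wpM2l (ltW m0) hs.
      have -> : m * ((a + 1) * l ^+ 2 / 4) = mu * l ^+ 2 / 4 by rewrite /mu; ring.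
      done.
    rewrite expr2; apply: (le_trans (y := H * (mu * l ^+ 2 / 4))).
      by apply: ler_wpM2r => //; exact: hB.
    by apply: ler_wpM2l.
  have hs := @hfun_big _ a (ltW a0) (ltW hl); rewrite -/l in hs.
  have h1 : mu * l / 2 <= H.
    have := ler_wpM2l (ltW m0) hs.
    have -> : m * ((a + 1) * l / 2) = mu * l / 2 by rewrite /mu; ring.
    done.
  have h2 : (mu * l / 2) ^+ 2 <= H ^+ 2.
    apply: lerXn2r; rewrite ?nnegrE //.
    by apply: divr_ge0 => //; apply: mulr_ge0; apply: ltW.
  apply: le_trans h2.
  have -> : (mu * l / 2) ^+ 2 = mu * (mu * l ^+ 2 / 4) by field.
  by apply: ler_wpM2r => //; exact: hB2.
have -> : T0 eps m a ^+ 2 / (4 * mu) = k ^+ 2 * H ^+ 2 / (4 * mu * l ^+ 2).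
  by rewrite /T0 -/k -/H -/l; field; apply/andP; split; rewrite gt_eqF.
have -> : k ^+ 2 * B / 16 = k ^+ 2 * (B * (mu * l ^+ 2 / 4)) / (4 * mu * l ^+ 2).
  by field; apply/andP; split; rewrite gt_eqF.
apply: ler_wpM2r.
  by rewrite invr_ge0; apply: mulr_ge0; [apply: mulr_ge0 => //; exact: ltW|exact: sqr_ge0].
by apply: ler_wpM2l; [exact: sqr_ge0|exact: key].
Qed.
End Core.
Arguments kap {R}. Arguments T0 {R}. Arguments T0_ge0 {R eps m a}.
Arguments core_good {R eps m a L e}. Arguments core_rate {R eps m a B}.

End M3.
Import M3.

Module M4.

Section Count.
Variable R : realType.

Lemma binom_bound (n k : nat) : (0 < k <= n)%N ->
  ('C(n, k))%:R * ((k%:R / n%:R) ^+ k) <= expR (k%:R : R).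
Proof.
move=> /andP[k0 kn].
have n0 : (0 < n)%N by apply: leq_trans kn.
have nR : (0 : R) < n%:R by rewrite ltr0n.
set x : R := k%:R / n%:R.
have x0 : 0 <= x by apply: divr_ge0; apply: ler0n.
have h1 : (x + 1) ^+ n <= expR (k%:R : R).
  have -> : (k%:R : R) = n%:R * x by rewrite /x mulrC mulfVK ?gt_eqF.
  rewrite expRM_natl; apply: lerXn2r; rewrite ?nnegrE ?expR_ge0 //.
    by apply: addr_ge0.
  by rewrite addrC; apply: expR_ge1Dx.
apply: le_trans h1.
rewrite exprD1n (bigD1 (Ordinal (n:=n.+1) (m:=k) (kn : (k < n.+1)%N))) //=.
rewrite mulrC -mulr_natr -[leLHS]addr0; apply: lerD; first by rewrite mul1r mulr_natr.
apply: sumr_ge0 => i _; apply: mulrn_wge0; apply: exprn_ge0 => //.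
Qed.

Lemma term_bound (n r k : nat) (d : R) : 0 <= d -> (0 < k)%N -> (k <= r)%N -> (r < n)%N ->
  ('C(n, k))%:R * expR (- ((1 + d) * (k%:R * ln (n%:R / k%:R)))) <=
  expR (- (d * ln (n%:R / r%:R) - 1)) ^+ k.
Proof.
move=> d0 k0 kr rn.
have kn : (k <= n)%N by apply: leq_trans kr (ltnW rn).
have kR : (0 : R) < k%:R by rewrite ltr0n.
have rR : (0 : R) < r%:R by rewrite ltr0n; apply: leq_trans kr.
have nR : (0 : R) < n%:R by rewrite ltr0n; apply: leq_trans rn.
set c := ln (n%:R / k%:R).
have cr : ln (n%:R / r%:R) <= c.
  rewrite /c ler_ln ?posrE ?divr_gt0 //.
  by apply: ler_wpM2l; [exact: ltW| rewrite lef_pV2 ?posrE // ler_nat].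
have e1 : expR (- (k%:R * c)) = (k%:R / n%:R) ^+ k.
  rewrite /c -mulrN -lnV ?posrE ?divr_gt0 // invf_div expRM_natl lnK //.
  by rewrite posrE divr_gt0.
have -> : - ((1 + d) * (k%:R * c)) = - (k%:R * c) + - (d * (k%:R * c)) by ring.
rewrite expRD e1 mulrA.
apply: (le_trans (y := expR k%:R * expR (- (d * (k%:R * c))))).
  apply: ler_wpM2r; first exact: expR_ge0.
  by apply: binom_bound; rewrite k0 kn.
rewrite -expRD -expRM_natl ler_expR.
have : d * ln (n%:R / r%:R) <= d * c by apply: ler_wpM2l.
move=> h; have : 0 <= k%:R * (d * c - d * ln (n%:R / r%:R)).
  by apply: mulr_ge0; [exact: ltW| lra].
lra.
Qed.

Lemma geom_bound (x : R) (N : nat) : 0 <= x -> x <= 1 / 2 ->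
  \sum_(i < N) x ^+ i.+1 <= 2 * x.
Proof.
move=> x0 x1.
have key : (1 - x) * \sum_(i < N) x ^+ i.+1 = x - x ^+ N.+1.
  elim: N => [|N IH]; first by rewrite big_ord0 mulr0 expr1 subrr.
  rewrite big_ord_recr /= mulrDr IH [x ^+ N.+2]exprS; ring.
have S0 : 0 <= \sum_(i < N) x ^+ i.+1 by apply: sumr_ge0 => i _; apply: exprn_ge0.
have xn : 0 <= x ^+ N.+1 by apply: exprn_ge0.
have h : (1 - x) * \sum_(i < N) x ^+ i.+1 <= x by rewrite key; lra.
have : (1 / 2) * \sum_(i < N) x ^+ i.+1 <= (1 - x) * \sum_(i < N) x ^+ i.+1.
  by apply: ler_wpM2r => //; lra.
lra.
Qed.

Lemma sum_sets (n r : nat) (w : nat -> R) :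
  \sum_(D : {set 'I_n} | (0 < #|D| <= r)%N) w #|D| =
  \sum_(j < r.+1 | (0 < j)%N) w j *+ 'C(n, j).
Proof.
rewrite (partition_big (fun D : {set 'I_n} => (inord #|D| : 'I_r.+1)) (fun j : 'I_r.+1 => (0 < j)%N)).
  apply: eq_bigr => j j0.
  have -> : \sum_(D : {set 'I_n} | (0 < #|D| <= r)%N && (inord #|D| == j)) w #|D| =
            \sum_(D in [set D : {set 'I_n} | #|D| == j]) w j.
    apply: eq_big => D.
      rewrite inE; apply/andP/eqP.
        move=> [/andP[_ Dr]]; rewrite -val_eqE /= inordK //.
        by move/eqP.
      move=> Dj; split; first by rewrite Dj j0 -ltnS ltn_ord.
      by apply/eqP/val_inj; rewrite /= inordK // Dj ltn_ord.
    move=> /andP[/andP[_ Dr] /eqP Dj]; rewrite -Dj inordK //.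
  by rewrite sumr_const card_draws card_ord.
move=> D /andP[D0 Dr]; rewrite inordK //.
Qed.

End Count.

End M4.
Import M4.

Module M5.
Set Implicit Arguments. Unset Strict Implicit.

Lemma exists_min (R : realType) (T : finType) (P : pred T) (f : T -> R) x0 :
  P x0 -> exists2 y, P y & forall z, P z -> f y <= f z.
Proof.
move=> Px0.
case: (@arg_minP _ _ _ x0 P f Px0) => y Py hy.
by exists y.
Qed.

Section TypeI.
Variables (R : realType) (n : nat).

Lemma union_bound (q : edge n -> R) (I : finType) (P : pred I)
   (E : pred (graph n)) (F : I -> pred (graph n)) : okq q ->
  (forall A, E A -> exists2 i, P i & F i A) ->
  Pr q E <= \sum_(i | P i) Pr q (F i).
Proof.
move=> hq hE.
rewrite /Pr.
under [X in _ <= X]eq_bigr do rewrite big_mkcond /=.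
rewrite exchange_big /= big_mkcond /=.
apply: ler_sum => A _.
case: ifP => EA.
  have [i Pi FiA] := hE A EA.
  rewrite (bigD1 i) //= FiA -[leLHS]addr0; apply: lerD => //.
  by apply: sumr_ge0 => j _; case: ifP => // _; apply: gprob_ge0.
by apply: sumr_ge0 => j _; case: ifP => // _; apply: gprob_ge0.
Qed.

Lemma Pr_empty (q : edge n -> R) (E : pred (graph n)) : okq q ->
  (forall A, ~~ E A) -> Pr q E <= 0.
Proof.
move=> hq hE.
have := @markov R n q E (fun _ => 0) hq (fun _ => lexx 0).
have -> : Ex q (fun _ => 0) = 0 by rewrite /Ex big1 // => A _; rewrite mulr0.
apply => A EA; by move: (hE A); rewrite EA.
Qed.

Lemma typeI_D (p : 'I_n -> 'I_n -> R) (D : {set 'I_n}) (tau : R) :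
  okq (q0 p) -> 0 < tau -> (0 < #|D|)%N -> (#|D| < n)%N ->
  Pr (q0 p) (fun A => tau <= TkD p D A) <=
  expR (- (tau * (#|D|%:R * ln (n%:R / #|D|%:R)))).
Proof.
move=> hq t0 D0 Dn.
set L := #|D|%:R * ln (n%:R / #|D|%:R).
have L0 : 0 < L.
  apply: mulr_gt0; first by rewrite ltr0n.
  apply: ln_gt0; rewrite ltr_pdivlMr ?ltr0n // mul1r ltr_nat //.
set m := Ex (q0 p) (eD D).
have m0 : 0 <= m by apply: Ex_eD_ge0.
case: (eqVneq m 0) => [me|mn0].
  apply: le_trans (expR_ge0 _).
  apply: Pr_empty => // A; rewrite /TkD /= -/m me eqxx -ltNge //.
have mp : 0 < m by rewrite lt_def mn0 m0.
case: (pickP (fun A => tau <= TkD p D A)) => [A1 hA1|none]; last first.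
  apply: le_trans (expR_ge0 _).
  by apply: Pr_empty => // A; rewrite none.
have [A0 hA0 hmin] := @exists_min R _ (fun A => tau <= TkD p D A) (fun A => eD D A) A1 hA1.
pose s0 : R := eD D A0.
move: hA0 hmin => /= hA0 hmin.
have key : tau * L <= m * hfun (Num.max (s0 / m - 1) 0).
  move: hA0; rewrite /TkD /= -/m (negbTE mn0) -/L -/s0.
  by rewrite ler_pdivlMr.
have hpos : 0 < Num.max (s0 / m - 1) 0.
  rewrite lt_def; apply/andP; split.
    apply/negP => /eqP h; move: key; rewrite h hfun0 mulr0.
    by apply/negP; rewrite -ltNge; apply: mulr_gt0.
  by rewrite le_max lexx orbT.
have s0m : 0 < s0 / m - 1.
  by move: hpos; rewrite lt_max ltxx orbF.
have ms0 : m <= s0.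
  have : 1 < s0 / m by lra.
  by rewrite ltr_pdivlMr // mul1r => /ltW.
rewrite (max_l (ltW s0m)) in key.
apply: (le_trans (upper_tail (s := s0) hq mp ms0 _)).
  by move=> A hA; apply: hmin.
by rewrite ler_expR lerN2.
Qed.


Lemma typeI (p : 'I_n -> 'I_n -> R) (r : nat) (eps : R) :
  okq (q0 p) -> 0 < eps -> (0 < r)%N -> (r < n)%N ->
  expR (- (eps / 2 * ln (n%:R / r%:R) - 1)) <= 1 / 2 ->
  Pr (q0 p) (fun A => scan_test p r eps A != false) <=
  2 * expR (- (eps / 2 * ln (n%:R / r%:R) - 1)).
Proof.
move=> hq e0 r0 rn hx.
set tau := 1 + eps / 2.
have t0 : 0 < tau by rewrite /tau; lra.
apply: (le_trans (@union_bound (q0 p) _ (fun D : {set 'I_n} => (0 < #|D| <= r)%N) _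
   (fun D A => tau <= TkD p D A) hq _)).
  move=> A; rewrite /scan_test /Tk -/tau => hA.
  have hA' : tau <= \big[Num.max/0]_(D : {set 'I_n} | (0 < #|D| <= r)%N) TkD p D A.
    by move: hA; case: (_ <= _).
  case: (boolP [exists D : {set 'I_n}, (0 < #|D| <= r)%N && (tau <= TkD p D A)]).
    by move=> /existsP [D /andP[h1 h2]]; exists D.
  move=> /existsPn hn; exfalso.
  have : \big[Num.max/0]_(D : {set 'I_n} | (0 < #|D| <= r)%N) TkD p D A < tau.
    apply: bigmax_lt => // D hD; have := hn D; rewrite hD /= -ltNge; exact.
  by rewrite ltNge hA'.
apply: (le_trans (y := \sum_(D : {set 'I_n} | (0 < #|D| <= r)%N)
    expR (- (tau * (#|D|%:R * ln (n%:R / #|D|%:R)))))).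
  apply: ler_sum => D /andP[D0 Dr]; apply: typeI_D => //.
  exact: leq_ltn_trans Dr rn.
have := @sum_sets R n r (fun k => expR (- (tau * (k%:R * ln (n%:R / k%:R))))) => /= ->.
set x := expR (- (eps / 2 * ln (n%:R / r%:R) - 1)).
have x0 : 0 <= x by apply: expR_ge0.
apply: (le_trans (y := \sum_(j < r.+1 | (0 < j)%N) x ^+ j)).
  apply: ler_sum => j j0; rewrite -[_ *+ 'C(n, j)]mulr_natl; apply: (@term_bound R n r j (eps / 2)) => //.
    by apply: divr_ge0; [apply: ltW|].
  by rewrite -ltnS ltn_ord.
rewrite big_mkcond big_ord_recl /= add0r.
under eq_bigr do rewrite /bump add1n.
exact: geom_bound.
Qed.


Lemma typeII (p : 'I_n -> 'I_n -> R) (r : nat) (rho : R) (C Ds : {set 'I_n}) (eps B : R) :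
  okq (qC p rho C) -> okq (q0 p) -> 1 < rho -> 0 < eps -> (r < n)%N -> #|C| = r ->
  is_most_informative p C Ds ->
  1 + eps <= \big[Num.max/0]_(D : {set 'I_n} | (D \subset C) && (D != finset.set0))
              (Ex (q0 p) (eD D) * hfun (rho - 1) / (#|D|%:R * ln (n%:R / #|D|%:R))) ->
  B <= ln (n%:R / r%:R) -> B <= Ex (qC p rho C) (eD Ds) ->
  Pr (qC p rho C) (fun A => scan_test p r eps A != true) <=
  expR (- (kap eps ^+ 2 * B / 16)).
Proof.
move=> hqC hq0 rho1 e0 rn hC [DsC [Ds0 hmax]] hdet hBl hBmu.
have k0 : (0 < #|Ds|)%N by rewrite card_gt0.
have kr : (#|Ds| <= r)%N by rewrite -hC subset_leq_card.
have kn : (#|Ds| < n)%N by apply: leq_ltn_trans kr rn.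
have kR : (0 : R) < #|Ds|%:R by rewrite ltr0n.
have rR : (0 : R) < r%:R by rewrite ltr0n; apply: leq_trans kr.
have nR : (0 : R) < n%:R by rewrite ltr0n; apply: leq_trans rn.
pose L : R := #|Ds|%:R * ln (n%:R / #|Ds|%:R).
have lk0 : 0 < ln (n%:R / #|Ds|%:R : R).
  by apply: ln_gt0; rewrite ltr_pdivlMr ?ltr0n // mul1r ltr_nat.
have L0 : 0 < L by apply: mulr_gt0.
pose m : R := Ex (q0 p) (eD Ds).
have m0 : 0 <= m by apply: Ex_eD_ge0.
pose a : R := rho - 1.
have a0 : 0 < a by rewrite /a subr_gt0.
have ha0 : 0 <= hfun a by apply: hfun_ge0; apply: ltW.
have hH : (1 + eps) * L <= m * hfun a.
  have hb : \big[Num.max/0]_(D : {set 'I_n} | (D \subset C) && (D != finset.set0))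
              (Ex (q0 p) (eD D) * hfun (rho - 1) / (#|D|%:R * ln (n%:R / #|D|%:R)))
            <= m / L * hfun a.
    apply: bigmax_le.
      by apply: mulr_ge0 => //; apply: divr_ge0 => //; apply: ltW.
    move=> D /andP[DC D0].
    rewrite mulrAC -/a.
    apply: ler_wpM2r => //.
    exact: (hmax D DC D0).
  have := le_trans hdet hb.
  by rewrite mulrAC ler_pdivlMr.
have mp : 0 < m.
  rewrite lt_def m0 andbT; apply/negP => /eqP me.
  move: hH; rewrite me mul0r; apply/negP; rewrite -ltNge.
  by apply: mulr_gt0 => //; lra.
have hmu : Ex (qC p rho C) (eD Ds) = (a + 1) * m.
  rewrite /m !Ex_eD mulr_sumr; apply: eq_bigr => e.
  rewrite /inD => /andP[h1 h2].
  by rewrite /qC (fintype.subsetP DsC _ h1) (fintype.subsetP DsC _ h2) /= /a subrK.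
have hB1 : B <= m * hfun a.
  apply: (le_trans hBl); apply: le_trans hH.
  have h1 : ln (n%:R / r%:R : R) <= ln (n%:R / #|Ds|%:R : R).
    rewrite ler_ln ?posrE ?divr_gt0 //.
    by apply: ler_wpM2l; [exact: ltW| rewrite lef_pV2 ?posrE // ler_nat].
  apply: (le_trans h1).
  have h2 : ln (n%:R / #|Ds|%:R : R) <= L.
    by rewrite /L ler_peMl //; [exact: ltW| rewrite ler1n].
  apply: (le_trans h2).
  by rewrite ler_peMl //; [exact: ltW| lra].
have hB2 : B <= (a + 1) * m by rewrite -hmu.
have mu0 : 0 < Ex (qC p rho C) (eD Ds).
  by rewrite hmu; apply: mulr_gt0 => //; lra.
have mn0 : m != 0 by rewrite gt_eqF.
apply: (le_trans (@lower_tail _ _ (qC p rho C) Ds _ (T0 eps m a) hqC mu0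
   (T0_ge0 e0 mp a0) _)).
  move=> A hA; rewrite hmu ltNge; apply/negP => hge.
  have hg := core_good e0 mp a0 hH hge.
  suff hX : 1 + eps / 2 <= Tk p r A by move: hA; rewrite /scan_test hX.
  rewrite /Tk.
  have hDs : (0 < #|Ds| <= r)%N by rewrite k0 kr.
  apply: (le_trans _ (@le_bigmax_cond _ _ _ 0 Ds _ (fun D => TkD p D A) hDs)) => /=.
  rewrite /TkD /= -/m (negbTE mn0) -/L.
  by rewrite ler_pdivlMr.
rewrite hmu ler_expR lerN2.
exact: core_rate.
Qed.

End TypeI.

End M5.
Import M5.

Local Open Scope classical_set_scope.

Theorem theorem2 (R : realType)
  (p : forall n : nat, 'I_n -> 'I_n -> R)
  (r : nat -> nat)
  (rho : forall n : nat, {set 'I_n} -> R)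
  (eps : R)
  (Dstar : forall n : nat, {set 'I_n} -> {set 'I_n}) :
  (* standing assumptions *)
  (forall n (i j : 'I_n), i != j -> 0 <= p n i j <= 1) ->
  (forall n (i j : 'I_n), i != j -> p n i j = p n j i) ->
  (forall n (C : {set 'I_n}), #|C| = r n -> 1 < rho n C) ->
  (forall n (C : {set 'I_n}) (i j : 'I_n), #|C| = r n -> i \in C -> j \in C -> i != j ->
     rho n C * p n i j <= 1) ->
  0 < eps ->
  (* D^*_C is a most informative subgraph of C *)
  (forall n (C : {set 'I_n}), #|C| = r n -> is_most_informative (p n) C (Dstar n C)) ->
  (* r = o(n) *)
  (fun n => (r n)%:R / n%:R : R) @ \oo --> 0 ->
  (* E_C[e(D^*_C)] -> oo for all C with |C| = r (uniformly in C) *)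
  (forall M : R, \forall n \near \oo, forall C : {set 'I_n}, #|C| = r n ->
       M <= Ex (qC (p n) (rho n C) C) (eD (Dstar n C))) ->
  (* detection condition *)
  (forall n (C : {set 'I_n}), #|C| = r n ->
     1 + eps <= \big[Num.max/0]_(D : {set 'I_n} | (D \subset C) && (D != finset.set0))
                  (Ex (q0 (p n)) (eD D) * hfun (rho n C - 1)
                     / (#|D|%:R * ln (n%:R / #|D|%:R)))) ->
  (* the scan test is asymptotically powerful *)
  (fun n => risk (p n) (r n) (rho n) (scan_test (p n) (r n) eps)) @ \oo --> 0.
Proof.
move=> hp hsym hrho hrhop heps hD hr hE hdet.
have hq0 : forall n, okq (q0 (p n)).
  move=> n [[i j] /= hij]; rewrite /q0 /=; apply: hp.
  by apply/eqP => e; move: hij; rewrite e ltnn.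
have hqC : forall n (C : {set 'I_n}), #|C| = r n -> okq (qC (p n) (rho n C) C).
  move=> n C hC [[i j] /= hij]; rewrite /qC /=.
  have ij : i != j by apply/eqP => e; move: hij; rewrite e ltnn.
  case: ifP => [/andP[hi hj]|_]; last exact: hp.
  apply/andP; split; last exact: hrhop.
  apply: mulr_ge0; first by apply: ltW; apply: lt_trans (hrho n C hC).
  by case/andP: (hp n i j ij).
have hr0 : forall n, (0 < r n)%N.
  move=> n; rewrite lt0n; apply/negP => /eqP r0.
  have := hdet n finset.set0; rewrite cards0 r0 => /(_ erefl).
  rewrite big_pred0 => [|D]; first by lra.
  by rewrite finset.subset0 andbN.
apply/cvgrPdist_le => e e0.
pose d : R := eps / 2.
have d0 : 0 < d by rewrite /d; lra.
pose k : R := kap eps.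
have k0 : 0 < k by rewrite /k /kap; apply: divr_gt0; lra.
pose w : R := Num.min (e / 4) (1 / 2).
have w0 : 0 < w by rewrite /w lt_min; apply/andP; split; lra.
have we : w <= e / 4 by rewrite /w ge_min lexx.
have w2 : w <= 1 / 2 by rewrite /w ge_min lexx orbT.
pose B1 : R := (1 - ln w) / d.
pose B2 : R := 16 * (- ln (e / 2)) / k ^+ 2.
pose B : R := Num.max 1 (Num.max B1 B2).
have B1B : B1 <= B by rewrite /B !le_max lexx orbT.
have B2B : B2 <= B by rewrite /B !le_max lexx !orbT.
have B1le : 1 <= B by rewrite /B le_max lexx.
have F1 := nbhs_infty_gt 0.
move/cvgr_dist_lt: (hr) => /(_ _ (expR_gt0 (- B))) F2.
have F3 := hE B.
apply: (filterS3 _ _ F1 F2 F3) => n n0 hrn hmu.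
have rnR : (0 : R) < (r n)%:R by rewrite ltr0n.
have nR : (0 : R) < n%:R by rewrite ltr0n.
have rnpos : (0 : R) < (r n)%:R / n%:R by apply: divr_gt0.
move: hrn; rewrite sub0r normrN gtr0_norm // => hrn.
have hrn1 : (r n < n)%N.
  have : (r n)%:R / n%:R < (1 : R).
    apply: (lt_le_trans hrn); rewrite expR_le1; lra.
  by rewrite ltr_pdivrMr // mul1r ltr_nat.
have hlnB : B <= ln (n%:R / (r n)%:R : R).
  have : ln ((r n)%:R / n%:R : R) < - B.
    by rewrite -[X in _ < X]expRK ltr_ln ?posrE ?expR_gt0.
  rewrite -invf_div lnV ?posrE ?divr_gt0 // => h; lra.
pose x : R := expR (- (eps / 2 * ln (n%:R / (r n)%:R) - 1)).
have xw : x <= w.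
  rewrite /x -[w]lnK ?posrE // ler_expR.
  have : d * B1 <= d * ln (n%:R / (r n)%:R : R).
    by apply: ler_wpM2l; [apply: ltW| apply: le_trans hlnB].
  have -> : d * B1 = 1 - ln w by rewrite /B1 mulrC mulfVK // gt_eqF.
  rewrite /d; lra.
have hI := typeI (hq0 n) heps (hr0 n) hrn1 (le_trans xw w2).
have hII : \big[Num.max/0]_(C : {set 'I_n} | #|C| == r n)
    Pr (qC (p n) (rho n C) C) (fun A => scan_test (p n) (r n) eps A != true) <= e / 2.
  apply: bigmax_le; first lra.
  move=> C /eqP hC.
  apply: (le_trans (typeII (hqC n C hC) (hq0 n) (hrho n C hC) heps hrn1 hC (hD n C hC)
     (hdet n C hC) hlnB (hmu C hC))).
  rewrite -[e / 2]lnK ?posrE; last lra.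
  rewrite ler_expR.
  have : k ^+ 2 * B2 / 16 <= k ^+ 2 * B / 16.
    apply: ler_wpM2r; first lra.
    by apply: ler_wpM2l => //; apply: sqr_ge0.
  have -> : k ^+ 2 * B2 / 16 = - ln (e / 2).
    by rewrite /B2; field; rewrite gt_eqF.
  rewrite -/k; lra.
have hIIge : 0 <= \big[Num.max/0]_(C : {set 'I_n} | #|C| == r n)
    Pr (qC (p n) (rho n C) C) (fun A => scan_test (p n) (r n) eps A != true).
  exact: bigmax_ge_id.
have hIge : 0 <= Pr (q0 (p n)) (fun A => scan_test (p n) (r n) eps A != false).
  exact: Pr_ge0.
rewrite /risk sub0r normrN ger0_norm; last by apply: addr_ge0.
rewrite -/x in hI.
lra.
Qed.
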